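(* Suppose $\{0,1\}^\ell$ admits a code decomposition with chain of parameters $(\ell,k_0,d_0)-(\ell,k_1,d_1)-\dots-(\ell,k_{m-1},d_{m-1})$, and set $k_m=0$. Then there exists a kernel $g$ of dimension $\ell$ with $E(g)\ge\frac1\ell\sum_{j=0}^{m-1}(k_j-k_{j+1})\log_\ell d_j$.
   Context: A code decomposition of $\{0,1\}^\ell$ with chain of parameters $(\ell,k_0,d_0)-(\ell,k_1,d_1)-\dots-(\ell,k_{m-1},d_{m-1})$ (integers $\ell=k_0>k_1>\dots>k_{m-1}\ge0$) is a family of nested partitions: level $0$ consists of the single set $\{0,1\}^\ell$, and for $j=1,\dots,m-1$ each set of level $j-1$ is partitioned into equally sized sets forming level $j$; every set at level $j$ has exactly $2^{k_j}$ elements and minimum Hamming distance at least $d_j$ between distinct elements. A kernel of dimension $\ell$ is a bijection $g:\{0,1\}^\ell\to\{0,1\}^\ell$; ${\bf a}\bullet{\bf b}$ denotes concatenation, $d_H$ Hamming distance; partial distances $D_{min}^{(i)}=\min\{d_H(g({\bf w}\bullet 0\bullet{\bf u}),g({\bf w}\bullet 1\bullet {\bf v})) : {\bf w}\in\{0,1\}^i,\ {\bf u},{\bf v}\in\{0,1\}^{\ell-i-1}\}$; exponent $E(g)=\frac1\ell\sum_{i=0}^{\ell-1}\log_\ell D_{min}^{(i)}$. *)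

(* Defs.v *)
From HB Require Import structures.
From Stdlib Require Import Reals.
From mathcomp Require Import all_boot.
Set Implicit Arguments. Unset Strict Implicit. Unset Printing Implicit Defensive.

Notation word l := (l.-tuple bool).

Definition dH (l : nat) (x y : word l) : nat :=
  \sum_(j < l) (tnth x j != tnth y j).

Definition split_at (l i : nat) (x : word l) (w : seq bool) (b : bool)
    (u : seq bool) : bool :=
  (size w == i) && ((x : seq bool) == w ++ b :: u).

(* The pair (x,y) is of the form (w.0.u, w.1.v) with |w| = i.
   (w, u, v are determined by x, y: w = take i x, u = drop i.+1 x, ...) *)
Definition partial_pair (l i : nat) (x y : word l) : bool :=
  split_at i x (take i x) false (drop i.+1 x) &&
  split_at i y (take i x) true (drop i.+1 y).

(* D_min^(i) of g : minimum over such pairs; the default value l is never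
   used for i < l since the set of pairs is then nonempty. *)
Definition Dmin (l : nat) (g : word l -> word l) (i : nat) : nat :=
  \big[minn/l]_(p : word l * word l | partial_pair i p.1 p.2) dH (g p.1) (g p.2).

Definition logb (b x : R) : R := Rdiv (ln x) (ln b).

Definition exponent (l : nat) (g : word l -> word l) : R :=
  Rmult (Rinv (INR l)) (\big[Rplus/R0]_(i < l) logb (INR l) (INR (Dmin g i))).

Definition kernel (l : nat) (g : word l -> word l) : Prop := bijective g.

(* Code decomposition of {0,1}^l with chain of parameters
   (l,k_0,d_0)-...-(l,k_{m-1},d_{m-1}); P j is the set of level-j sets. *)
Definition code_decomposition (l m : nat) (k d : nat -> nat)
    (P : nat -> {set {set word l}}) : Prop :=
  [/\ k 0 = l,
      (forall j, j.+1 < m -> k j.+1 < k j),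
      P 0 = [set [set: word l]],
      (forall j, 0 < j < m ->
         (forall A, A \in P j.-1 -> partition [set B in P j | B \subset A] A) /\
         (forall B, B \in P j -> exists2 A, A \in P j.-1 & B \subset A)) &
      (forall j, j < m -> forall B, B \in P j ->
         #|B| = 2 ^ k j /\
         (forall x y, x \in B -> y \in B -> x != y -> d j <= dH x y))].

(* Main.v *)
Require Import Defs.
From HB Require Import structures.
From Stdlib Require Import Reals.
From mathcomp Require Import all_boot.
From mathcomp Require Import zify.
From Stdlib Require Import Lra.
Set Implicit Arguments. Unset Strict Implicit.

Fixpoint rk (s : seq bool) : nat := if s is b :: s' then b + 2 * rk s' else 0.

Lemma rk_lt s : rk s < 2 ^ size s.
Proof. elim: s => [|b s IH] //=; rewrite expnS; case: b => /=; lia. Qed.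

Lemma rk_inj s t : size s = size t -> rk s = rk t -> s = t.
Proof.
elim: s t => [|b s IH] [|c t] //= [] Hs H.
have Hbc : b = c by case: b c H => [] [] /=; lia.
subst c; congr (_ :: _); apply: IH => //; case: b H => /=; lia.
Qed.

Definition Good l m (k : nat -> nat) (P : nat -> {set {set word l}}) j
   (A : {set word l}) (f : seq bool -> word l) :=
 [/\ (forall s, size s = k j -> f s \in A),
     (forall s t, size s = k j -> size t = k j -> f s = f t -> s = t) &
     (forall j', j <= j' < m -> forall s t, size s = k j -> size t = k j ->
        take (k j - k j') s = take (k j - k j') t ->
        exists B, [/\ B \in P j', f s \in B & f t \in B])].

Definition enumf (T : finType) (A : {set T}) (x0 : T) (s : seq bool) : T :=
  nth x0 (enum A) (rk s).

Lemma enumf_in (T : finType) (A : {set T}) x0 s :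
  2 ^ size s <= #|A| -> enumf A x0 s \in A.
Proof.
move=> H; rewrite /enumf -mem_enum; apply: mem_nth.
rewrite -cardE; exact: leq_trans (rk_lt s) H.
Qed.

Lemma enumf_inj (T : finType) (A : {set T}) x0 s t :
  size s = size t -> 2 ^ size s <= #|A| ->
  enumf A x0 s = enumf A x0 t -> s = t.
Proof.
move=> Hst H /eqP; rewrite /enumf nth_uniq ?enum_uniq -?cardE.
- by move/eqP => H1; apply: rk_inj.
- exact: leq_trans (rk_lt s) H.
- by rewrite Hst in H; exact: leq_trans (rk_lt t) H.
- by [].
Qed.

Lemma kmono m (k : nat -> nat) : (forall j, j.+1 < m -> k j.+1 < k j) ->
  forall i i', i <= i' -> i' < m -> k i' <= k i.
Proof.
move=> H i i' Hii'; elim: i' Hii' => [|i' IH] Hii' Hm.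
- by have -> : i = 0 by lia.
- case: (ltngtP i i'.+1) => [Hl||->] //; last by lia.
  have := H i' Hm; have := IH ltac:(lia) ltac:(lia); lia.
Qed.

Lemma build l m (k d : nat -> nat) (P : nat -> {set {set word l}}) :
  code_decomposition m k d P ->
  forall n j, j + n.+1 = m -> exists F, forall A, A \in P j -> Good m k P j A (F A).
Proof.
case=> Hk0 Hkdec HP0 Hpart Hsz.
set x0 := nseq_tuple l false.
elim=> [|n IH] j Hj.
- exists (fun A => enumf A x0) => A HA.
  have [cA _] := Hsz j ltac:(lia) A HA.
  split.
  + by move=> s Hs; apply: enumf_in; rewrite Hs cA.
  + by move=> s t Hs Ht; apply: enumf_inj; rewrite ?Hs ?Ht ?cA.
  + move=> j' /andP[H1 H2] s t Hs Ht _.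
    have -> : j' = j by lia.
    exists A; split => //; apply: enumf_in; by rewrite ?Hs ?Ht cA.
- have [F1 HF1] := IH j.+1 ltac:(lia).
  have Hkj : k j.+1 < k j by apply: Hkdec; lia.
  set a := k j - k j.+1.
  pose Ch (A : {set word l}) : {set {set word l}} := [set B in P j.+1 | B \subset A].
  exists (fun (A : {set word l}) (s : seq bool) => F1 (enumf (Ch A) set0 (take a s)) (drop a s)) => A HA.
  have [Hp _] := Hpart j.+1 ltac:(lia).
  have Hpa : partition (Ch A) A by exact: Hp.
  have [cA _] := Hsz j ltac:(lia) A HA.
  have Hcard : 2 ^ a <= #|Ch A|.
    have := card_partition Hpa; rewrite cA.
    rewrite (eq_bigr (fun _ => 2 ^ k j.+1)); last first.
      by move=> B; rewrite inE => /andP[HB _]; have [] := Hsz j.+1 ltac:(lia) B HB.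
    rewrite sum_nat_const.
    have -> : k j = a + k j.+1 by rewrite /a; lia.
    by rewrite expnD => /eqP; rewrite eqn_pmul2r ?expn_gt0 // => /eqP <-.
  have Hch : forall q, size q = a -> enumf (Ch A) set0 q \in P j.+1 /\
                  enumf (Ch A) set0 q \subset A.
    move=> q Hq; rewrite -Hq in Hcard; have := enumf_in set0 Hcard.
    by rewrite inE => /andP[].
  have Hmem : forall s, size s = k j ->
     F1 (enumf (Ch A) set0 (take a s)) (drop a s) \in A.
    move=> s Hs.
    have [B1 B2] := Hch (take a s) ltac:(rewrite size_takel; lia).
    have [G1 _ _] := HF1 _ B1.
    apply: (subsetP B2); apply: G1; rewrite size_drop; lia.
  split.
  - exact: Hmem.
  - move=> s t Hs Ht Heq.
    have Hsa : size (take a s) = a by rewrite size_takel; lia.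
    have Hta : size (take a t) = a by rewrite size_takel; lia.
    have [B1 B2] := Hch _ Hsa.
    have [C1 C2] := Hch _ Hta.
    have [G1 G2 _] := HF1 _ B1.
    have [H1 H2 _] := HF1 _ C1.
    have Ed : size (drop a s) = k j.+1 by rewrite size_drop; lia.
    have Et : size (drop a t) = k j.+1 by rewrite size_drop; lia.
    have EB : enumf (Ch A) set0 (take a s) = enumf (Ch A) set0 (take a t).
      apply/eqP; apply/negPn/negP => Hne.
      have [_ Htriv _] := and3P Hpa.
      have Hin1 : enumf (Ch A) set0 (take a s) \in Ch A by rewrite inE B1 B2.
      have Hin2 : enumf (Ch A) set0 (take a t) \in Ch A by rewrite inE C1 C2.
      have Hd := trivIsetP Htriv _ _ Hin1 Hin2 Hne.
      have Hx1 := G1 _ Ed. have Hx2 := H1 _ Et.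
      by rewrite -Heq (disjointFr Hd Hx1) in Hx2.
    have Etake : take a s = take a t.
      by apply: enumf_inj EB; rewrite ?Hsa ?Hta.
    rewrite -(cat_take_drop a s) -(cat_take_drop a t) Etake; congr (_ ++ _).
    apply: G2 => //; rewrite Heq EB //.
  - move=> j' /andP[Hj1 Hj2] s t Hs Ht Htk.
    case: (ltngtP j j') => [Hlt|Hgt|<-]; [|by lia|].
    + have Hk' : k j' <= k j.+1 by apply: (kmono Hkdec); lia.
      have Hsa : size (take a s) = a by rewrite size_takel; lia.
      have Hta : size (take a t) = a by rewrite size_takel; lia.
      have Etake : take a s = take a t.
        have Ha : a <= k j - k j' by rewrite /a; lia.
        by rewrite -(take_takel s Ha) Htk take_takel.
      have [B1 B2] := Hch _ Hsa.
      have [_ _ G3] := HF1 _ B1.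
      rewrite -Etake; apply: G3; rewrite ?size_drop ?Ht ?Hs; try lia.
      rewrite !take_drop.
      have -> : k j.+1 - k j' + a = k j - k j' by rewrite /a; lia.
      by rewrite Htk.
    + by exists A; split => //; apply: Hmem.
Qed.

HB.instance Definition _ := Monoid.isComLaw.Build R R0 Rplus (fun a b c => esym (Rplus_assoc a b c)) Rplus_comm Rplus_0_l.

Lemma sum_interval (F : nat -> R) (c : R) a n :
  (forall i, a <= i < a + n -> Rle c (F i)) ->
  Rle (Rmult (INR n) c) (\big[Rplus/R0]_(a <= i < a + n) F i).
Proof.
elim: n => [|n IH] H.
- rewrite addn0 big_geq //=; lra.
- rewrite addnS big_nat_recr; last by lia.
  rewrite S_INR Rmult_plus_distr_r Rmult_1_l.
  apply: Rplus_le_compat; first by apply: IH => i Hi; apply: H; lia.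
  apply: H; lia.
Qed.

Lemma logb_mono (l a b : nat) : 1 < l -> 0 < a -> a <= b ->
  Rle (logb (INR l) (INR a)) (logb (INR l) (INR b)).
Proof.
move=> Hl Ha Hab; rewrite /logb /Rdiv.
have Hl0 : Rlt 0 (ln (INR l)).
  rewrite -ln_1; apply: ln_increasing; first lra.
  have := lt_INR 1 l ltac:(apply/ltP; exact Hl); rewrite /=; lra.
apply: Rmult_le_compat_r; first by left; apply: Rinv_0_lt_compat.
have Ha' := lt_0_INR a ltac:(apply/ltP; exact Ha).
have := le_INR a b ltac:(apply/leP; exact Hab) => [[H|H]].
- by left; apply: ln_increasing.
- by rewrite H; right.
Qed.

Lemma dH_le l (x y : word l) : dH x y <= l.
Proof.
rewrite /dH; rewrite [X in _ <= X](_ : l = \sum_(j < l) 1); last by rewrite sum1_card card_ord.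
by apply: leq_sum => i _; apply: leq_b1.
Qed.

Theorem corollary1 (l m : nat) (k d : nat -> nat)
    (P : nat -> {set {set word l}}) :
  (2 <= l)%N -> (0 < m)%N -> k m = 0%N ->
  (forall j, (j < m)%N -> (0 < d j)%N) ->
  code_decomposition m k d P ->
  exists g : word l -> word l, kernel g /\
    Rge (exponent g)
      (Rmult (Rinv (INR l))
        (\big[Rplus/R0]_(j < m) Rmult (INR (k j - k j.+1)) (logb (INR l) (INR (d j))))).
Proof.
move=> Hl Hm Hkm Hd Hdec.
have Hdec' := Hdec; case: Hdec' => Hk0 Hkdec HP0 Hpart Hsz.
have [F HF] := @build _ _ _ _ _ Hdec m.-1 0 ltac:(lia).
have HT : [set: word l] \in P 0 by rewrite HP0 set11.
have [G1 G2 G3] := HF _ HT.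
pose g (x : word l) := F [set: word l] x.
exists g.
have ginj : injective g.
  move=> x y /G2 H; apply: val_inj; apply: H; by rewrite size_tuple Hk0.
split; first exact: injF_bij.
have Hlev : forall j, j < m -> forall x y : word l,
    take (l - k j) x = take (l - k j) y ->
    exists B, [/\ B \in P j, g x \in B & g y \in B].
  move=> j Hj x y Hxy; apply: G3; rewrite ?size_tuple ?Hk0 //; lia.
set x0 := nseq_tuple l false.
have HD : forall j i, j < m -> l - k j <= i < l - k j.+1 -> d j <= Dmin g i.
  move=> j i Hj /andP[Hi1 Hi2].
  have Hkj : 0 < k j by lia.
  have Hdl : d j <= l.
    have [B [HB Hx _]] := Hlev j Hj x0 x0 erefl.
    have [cB HdB] := Hsz j Hj B HB.
    have : 1 < #|B|.
      rewrite cB; have : 2 ^ 1 <= 2 ^ k j by rewrite leq_exp2l.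
      by [].
    move/card_gt1P => [u [v [Hu Hv Huv]]].
    have := HdB u v Hu Hv Huv; have := dH_le u v; lia.
  rewrite /Dmin; apply: (big_ind (fun x => d j <= x)) => //.
    by move=> a b Ha Hb; rewrite leq_min Ha Hb.
  move=> [x y] /= Hp.
  move/andP: Hp => [/andP[_ /eqP hx] /andP[_ /eqP hy]].
  have Hsi : size (take i x) = i by rewrite size_takel // size_tuple; lia.
  have Hty : take i y = take i x by rewrite hy take_size_cat.
  have Hi1' : l - k j <= i by [].
  have Htk : take (l - k j) x = take (l - k j) y.
    by rewrite -(take_takel x Hi1') -(take_takel y Hi1') Hty.
  have [B [HB Hx Hy]] := Hlev j Hj x y Htk.
  have [_ HdB] := Hsz j Hj B HB.
  apply: HdB => //; rewrite (inj_eq ginj); apply/negP => /eqP Exy.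
  subst y.
  have := congr1 (fun s => nth false s i) (etrans (esym hx) hy).
  by rewrite /= !nth_cat Hsi ltnn subnn.
have Hkle : forall j, j <= m -> k j <= l.
  move=> j Hj; case: (ltngtP j m) => [Hjm|Hjm|->]; last by rewrite Hkm.
  - rewrite -Hk0; apply: (kmono Hkdec); lia.
  - lia.
have Hkd : forall j, j < m -> k j.+1 <= k j.
  move=> j Hj; case: (ltngtP j.+1 m) => [Hjm|Hjm|->]; last by rewrite Hkm.
  - by apply: ltnW; apply: Hkdec.
  - lia.
pose T j := Rmult (INR (k j - k j.+1)) (logb (INR l) (INR (d j))).
pose FD i := logb (INR l) (INR (Dmin g i)).
have Claim : forall j, j <= m ->
  Rle (\big[Rplus/R0]_(0 <= j' < j) T j') (\big[Rplus/R0]_(0 <= i < l - k j) FD i).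
  elim=> [|j IH] Hj.
  - by rewrite !big_geq ?Hk0 ?subnn //; right.
  - rewrite big_nat_recr //.
    rewrite [X in Rle _ X](big_cat_nat (n := l - k j)) //; last first.
      have := Hkd j ltac:(lia); lia.
    apply: Rplus_le_compat; first by apply: IH; lia.
    have -> : l - k j.+1 = (l - k j) + (k j - k j.+1).
      have := Hkd j ltac:(lia); have := Hkle j ltac:(lia); lia.
    apply: sum_interval => i Hi.
    apply: logb_mono => //; first by apply: Hd; lia.
    apply: HD; first by lia.
    have := Hkd j ltac:(lia); have := Hkle j ltac:(lia); lia.
have := Claim m (leqnn m).
rewrite Hkm subn0 !big_mkord => HC.
rewrite /exponent; apply: Rle_ge; apply: Rmult_le_compat_l; last exact: HC.
left; apply: Rinv_0_lt_compat; apply: lt_0_INR; apply/ltP; lia.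
Qed.
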